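(* Let $f$ be a homeomorphism of a compact metric space with the shadowing property such that $f|_{\Omega(f)}$ is expansive. Then $f$ has the L-shadowing property.
   Context: Shadowing: for every $\varepsilon>0$ there is $\delta>0$ such that for every sequence $(x_k)_{k\in\mathbb{Z}}$ with $d(f(x_k),x_{k+1})<\delta$ for all $k$ there is $y$ with $d(f^k(y),x_k)<\varepsilon$ for all $k\in\mathbb{Z}$. L-shadowing: for every $\varepsilon>0$ there is $\delta>0$ such that every sequence $(x_k)_{k\in\mathbb{Z}}$ with $d(f(x_k),x_{k+1})\le\delta$ for all $k$ and $d(f(x_k),x_{k+1})\to0$ as $|k|\to\infty$ admits $z$ with $d(f^k(z),x_k)\le\varepsilon$ for all $k$ and $d(f^k(z),x_k)\to0$ as $|k|\to\infty$. $\Omega(f)$ is the non-wandering set. $f|_{\Omega(f)}$ is expansive if there is $c>0$ such that for all $x\in\Omega(f)$, the only $y\in\Omega(f)$ with $d(f^n(x),f^n(y))\le c$ for all $n\in\mathbb{Z}$ is $y=x$. *)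

(* Defs.v *)
From Stdlib Require Import Reals ZArith Lra.
Open Scope R_scope.

Record MetricSpace := {
  carrier :> Type;
  dist : carrier -> carrier -> R;
  dist_nonneg : forall x y, 0 <= dist x y;
  dist_eq0 : forall x y, dist x y = 0 <-> x = y;
  dist_sym : forall x y, dist x y = dist y x;
  dist_tri : forall x y z, dist x z <= dist x y + dist y z
}.

Section Topology.
Variable X : MetricSpace.

Definition is_open (U : X -> Prop) : Prop :=
  forall x, U x -> exists r, 0 < r /\ forall y, dist X x y < r -> U y.

Definition compact_space : Prop :=
  forall (I : Type) (U : I -> X -> Prop),
    (forall i, is_open (U i)) ->
    (forall x, exists i, U i x) ->
    exists l : list I, forall x, exists i, List.In i l /\ U i x.

Definition continuous (f : X -> X) : Prop :=
  forall x eps, 0 < eps -> exists del, 0 < del /\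
    forall y, dist X x y < del -> dist X (f x) (f y) < eps.

Definition homeomorphism (f g : X -> X) : Prop :=
  continuous f /\ continuous g /\
  (forall x, g (f x) = x) /\ (forall x, f (g x) = x).

Definition iterZ (f g : X -> X) (k : Z) (x : X) : X :=
  match k with
  | Z0 => x
  | Zpos p => Nat.iter (Pos.to_nat p) f x
  | Zneg p => Nat.iter (Pos.to_nat p) g x
  end.

Definition shadowing (f g : X -> X) : Prop :=
  forall eps, 0 < eps -> exists del, 0 < del /\
    forall xs : Z -> X,
      (forall k, dist X (f (xs k)) (xs (k + 1)%Z) < del) ->
      exists y, forall k, dist X (iterZ f g k y) (xs k) < eps.

Definition tends0_Zinf (u : Z -> R) : Prop :=
  forall eps, 0 < eps -> exists N : Z, forall k, (N <= Z.abs k)%Z -> Rabs (u k) < eps.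

Definition L_shadowing (f g : X -> X) : Prop :=
  forall eps, 0 < eps -> exists del, 0 < del /\
    forall xs : Z -> X,
      (forall k, dist X (f (xs k)) (xs (k + 1)%Z) <= del) ->
      tends0_Zinf (fun k => dist X (f (xs k)) (xs (k + 1)%Z)) ->
      exists z, (forall k, dist X (iterZ f g k z) (xs k) <= eps) /\
                tends0_Zinf (fun k => dist X (iterZ f g k z) (xs k)).

Definition nonwandering (f : X -> X) (x : X) : Prop :=
  forall U : X -> Prop, is_open U -> U x ->
    exists (n : nat) (y : X), (1 <= n)%nat /\ U y /\ U (Nat.iter n f y).

Definition expansive_on_Omega (f g : X -> X) : Prop :=
  exists c, 0 < c /\
    forall x y, nonwandering f x -> nonwandering f y ->
      (forall n : Z, dist X (iterZ f g n x) (iterZ f g n y) <= c) -> y = x.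

End Topology.

(* Main.v *)
Require Import Defs.
From Stdlib Require Import Reals ZArith Lra Lia Classical List.
Open Scope R_scope.

Local Notation dist := Defs.dist.
Local Notation dist_tri := Defs.dist_tri.
Local Notation dist_sym := Defs.dist_sym.
Local Notation dist_eq0 := Defs.dist_eq0.
Local Notation dist_nonneg := Defs.dist_nonneg.

Lemma iterZ_succ (X : MetricSpace) (f g : X -> X) :
  (forall x, g (f x) = x) -> (forall x, f (g x) = x) ->
  forall k x, iterZ X f g (k + 1) x = f (iterZ X f g k x).
Proof.
  intros gf fg k x. destruct k as [|p|p].
  - reflexivity.
  - simpl. rewrite Pos2Nat.inj_add. simpl. rewrite Nat.add_1_r. reflexivity.
  - destruct (Pos.eq_dec p 1) as [->|Hp].
    + simpl. rewrite fg. reflexivity.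
    + destruct (Pos.succ_pred_or p) as [H1|Hq]; [contradiction|].
      remember (Pos.pred p) as q. subst p.
      assert (E: (Z.neg (Pos.succ q) + 1)%Z = Z.neg q) by lia.
      rewrite E. simpl.
      rewrite Pos2Nat.inj_succ. simpl. rewrite fg. reflexivity.
Qed.

Lemma iterZ_pred (X : MetricSpace) (f g : X -> X) :
  (forall x, g (f x) = x) -> (forall x, f (g x) = x) ->
  forall k x, iterZ X f g k x = g (iterZ X f g (k + 1) x).
Proof.
  intros gf fg k x. rewrite iterZ_succ by assumption. rewrite gf. reflexivity.
Qed.

Lemma iterZ_add (X : MetricSpace) (f g : X -> X) :
  (forall x, g (f x) = x) -> (forall x, f (g x) = x) ->
  forall a b x, iterZ X f g (a + b) x = iterZ X f g a (iterZ X f g b x).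
Proof.
  intros gf fg a b x. induction a using Z.peano_ind.
  - reflexivity.
  - rewrite <- Z.add_1_r. replace (a + 1 + b)%Z with ((a + b) + 1)%Z by lia.
    rewrite !iterZ_succ by assumption. rewrite IHa. reflexivity.
  - rewrite <- Z.sub_1_r.
    rewrite (iterZ_pred X f g gf fg (a - 1 + b)).
    rewrite (iterZ_pred X f g gf fg (a - 1)).
    replace (a - 1 + b + 1)%Z with (a + b)%Z by lia.
    replace (a - 1 + 1)%Z with a by lia. rewrite IHa. reflexivity.
Qed.

Lemma iterZ_nat (X : MetricSpace) (f g : X -> X) :
  forall (n : nat) x, Nat.iter n f x = iterZ X f g (Z.of_nat n) x.
Proof.
  intros n x. destruct n. reflexivity.
  simpl. rewrite SuccNat2Pos.id_succ. reflexivity.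
Qed.

Lemma iterZ_swap (X : MetricSpace) (f g : X -> X) :
  forall k x, iterZ X g f k x = iterZ X f g (- k) x.
Proof. intros [|p|p] x; reflexivity. Qed.

Lemma cont_comp (X : MetricSpace) (F G : X -> X) :
  continuous X F -> continuous X G -> continuous X (fun x => F (G x)).
Proof.
  intros HF HG x e he.
  destruct (HF (G x) e he) as [d1 [hd1 H1]].
  destruct (HG x d1 hd1) as [d2 [hd2 H2]].
  exists d2. split; auto.
Qed.

Lemma cont_id (X : MetricSpace) : continuous X (fun x => x).
Proof. intros x e he. exists e. split; auto. Qed.

Lemma cont_ext (X : MetricSpace) (F G : X -> X) :
  (forall x, F x = G x) -> continuous X F -> continuous X G.
Proof.
  intros E HF x e he. destruct (HF x e he) as [d [hd H]].
  exists d. split; auto. intros y hy. rewrite <- !E. auto.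
Qed.

Lemma iterZ_cont (X : MetricSpace) (f g : X -> X) :
  homeomorphism X f g -> forall k, continuous X (iterZ X f g k).
Proof.
  intros [cf [cg [gf fg]]] k. induction k using Z.peano_ind.
  - apply cont_id.
  - rewrite <- Z.add_1_r.
    apply (cont_ext X (fun x => f (iterZ X f g k x))).
    + intros x. rewrite iterZ_succ by assumption. reflexivity.
    + apply cont_comp; assumption.
  - rewrite <- Z.sub_1_r.
    apply (cont_ext X (fun x => g (iterZ X f g k x))).
    + intros x. rewrite (iterZ_pred X f g gf fg (k-1)).
      replace (k - 1 + 1)%Z with k by lia. reflexivity.
    + apply cont_comp; assumption.
Qed.

Lemma dist_self (X : MetricSpace) x : dist X x x = 0.
Proof. apply dist_eq0. reflexivity. Qed.

Lemma ball_open (X : MetricSpace) x r : is_open X (fun y => dist X x y < r).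
Proof.
  intros y hy. exists (r - dist X x y). split; [lra|].
  intros z hz. pose proof (dist_tri X x y z). lra.
Qed.

Lemma fin_bound (X : MetricSpace) (Bad : X -> R -> nat -> Prop) :
  compact_space X -> (forall x, exists r N, 0 < r /\ Bad x r N) ->
  exists R N, 0 < R /\ forall y, exists x r M,
      Bad x r M /\ dist X x y < r /\ R <= r /\ (M <= N)%nat.
Proof.
  intros HC HB.
  set (I := {t : X * R * nat | 0 < snd (fst t) /\ Bad (fst (fst t)) (snd (fst t)) (snd t)}).
  set (U := fun (i : I) y => dist X (fst (fst (proj1_sig i))) y < snd (fst (proj1_sig i))).
  destruct (HC I U) as [l Hl].
  - intros i. apply ball_open.
  - intros y. destruct (HB y) as [r [N [hr hb]]].
    exists (exist _ (y, r, N) (conj hr hb)). unfold U; simpl. rewrite dist_self. lra.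
  - assert (HL: exists R N, 0 < R /\ forall i, In i l ->
        R <= snd (fst (proj1_sig i)) /\ (snd (proj1_sig i) <= N)%nat).
    { clear Hl. induction l as [|i l IH].
      - exists 1, 0%nat. split; [lra|]. intros i [].
      - destruct IH as [R [N [hR H]]].
        destruct i as [[[x r] M] [hr hb]]. simpl.
        exists (Rmin R r), (Nat.max N M). split.
        + apply Rmin_pos; assumption.
        + intros j [<-|hj]; simpl.
          * split; [apply Rmin_r|lia].
          * destruct (H j hj) as [h1 h2]. split; [|lia].
            pose proof (Rmin_l R r). lra. }
    destruct HL as [R [N [hR H]]]. exists R, N. split; [assumption|].
    intros y. destruct (Hl y) as [i [hi hu]].
    destruct (H i hi) as [h1 h2].
    destruct i as [[[x r] M] [hr hb]]. simpl in *.
    exists x, r, M. unfold U in hu; simpl in hu. auto.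
Qed.

Lemma cluster_pred (X : MetricSpace) (u : nat -> X) (P : nat -> Prop) :
  compact_space X -> (forall N, exists n, (N <= n)%nat /\ P n) ->
  exists p, forall r N, 0 < r -> exists n, (N <= n)%nat /\ P n /\ dist X (u n) p < r.
Proof.
  intros HC HP. apply NNPP. intros Hno.
  destruct (fin_bound X (fun x r N => forall n, (N <= n)%nat -> P n -> r <= dist X (u n) x) HC)
    as [R [N [hR H]]].
  - intros x. apply NNPP. intros Hx. apply Hno. exists x. intros r N hr.
    apply NNPP. intros Hn. apply Hx. exists r, N. split; [assumption|].
    intros n hn hp. apply Rnot_lt_le. intros hl. apply Hn. exists n. auto.
  - destruct (HP N) as [n [hn hp]].
    destruct (H (u n)) as [x [r [M [hb [hd [_ hM]]]]]].
    specialize (hb n ltac:(lia) hp). rewrite dist_sym in hd. lra.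
Qed.

Lemma cluster_pair (X : MetricSpace) (u v : nat -> X) (P : nat -> Prop) :
  compact_space X -> (forall N, exists n, (N <= n)%nat /\ P n) ->
  exists p q, forall r N, 0 < r -> exists n, (N <= n)%nat /\ P n /\
     dist X (u n) p < r /\ dist X (v n) q < r.
Proof.
  intros HC HP. destruct (cluster_pred X u P HC HP) as [p Hp].
  exists p. apply NNPP. intros Hno.
  destruct (fin_bound X (fun q r N => forall n, (N <= n)%nat -> P n -> dist X (u n) p < r ->
         r <= dist X (v n) q) HC) as [R [N [hR H]]].
  - intros x. apply NNPP. intros Hx. apply Hno. exists x. intros r N hr.
    apply NNPP. intros Hn. apply Hx. exists r, N. split; [assumption|].
    intros n hn hp hu. apply Rnot_lt_le. intros hl. apply Hn. exists n. auto.
  - destruct (Hp R N hR) as [n [hn [hp hu]]].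
    destruct (H (v n)) as [x [r [M [hb [hd [hr hM]]]]]].
    specialize (hb n ltac:(lia) hp ltac:(lra)). rewrite dist_sym in hd. lra.
Qed.

Lemma nw_fwd (X : MetricSpace) (f g : X -> X) (z p : X) :
  homeomorphism X f g ->
  (forall r N, 0 < r -> exists n, (N <= n)%nat /\ dist X (iterZ X f g (Z.of_nat n) z) p < r) ->
  nonwandering X f p.
Proof.
  intros [cf [cg [gf fg]]] H U HU Up.
  destruct (HU p Up) as [r [hr Hr]].
  destruct (H r 0%nat hr) as [n1 [_ h1]].
  destruct (H r (S n1) hr) as [n2 [hn2 h2]].
  exists (n2 - n1)%nat, (iterZ X f g (Z.of_nat n1) z). split; [lia|]. split.
  - apply Hr. rewrite dist_sym. assumption.
  - rewrite (iterZ_nat X f g). rewrite <- iterZ_add by assumption.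
    replace (Z.of_nat (n2 - n1) + Z.of_nat n1)%Z with (Z.of_nat n2) by lia.
    apply Hr. rewrite dist_sym. assumption.
Qed.

Lemma nw_swap (X : MetricSpace) (f g : X -> X) (x : X) :
  (forall x, g (f x) = x) -> (forall x, f (g x) = x) ->
  nonwandering X f x -> nonwandering X g x.
Proof.
  intros gf fg H U HU Ux. destruct (H U HU Ux) as [n [y [hn [Uy Un]]]].
  exists n, (Nat.iter n f y). split; [assumption|]. split; [assumption|].
  rewrite (iterZ_nat X g f), iterZ_swap, (iterZ_nat X f g).
  rewrite <- iterZ_add by assumption. replace (- Z.of_nat n + Z.of_nat n)%Z with 0%Z by lia.
  exact Uy.
Qed.

Lemma asym (X : MetricSpace) (f g : X -> X) (c : R) :
  compact_space X -> homeomorphism X f g -> 0 < c ->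
  (forall x y, nonwandering X f x -> nonwandering X f y ->
      (forall n : Z, dist X (iterZ X f g n x) (iterZ X f g n y) <= c) -> y = x) ->
  forall z y (N : Z), (forall k, (N <= k)%Z -> dist X (iterZ X f g k z) (iterZ X f g k y) <= c) ->
  forall eta, 0 < eta -> exists M : Z, forall k, (M <= k)%Z ->
      dist X (iterZ X f g k z) (iterZ X f g k y) < eta.
Proof.
  intros HC Hh hc Hexp z y N HN eta heta. apply NNPP. intros Hno.
  set (u := fun n : nat => iterZ X f g (Z.of_nat n) z).
  set (v := fun n : nat => iterZ X f g (Z.of_nat n) y).
  destruct (cluster_pair X u v (fun n => eta <= dist X (u n) (v n)) HC) as [p [q Hpq]].
  - intros N'. apply NNPP. intros Hn. apply Hno. exists (Z.of_nat N').
    intros k hk. apply Rnot_le_lt. intros hle. apply Hn.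
    exists (Z.to_nat k). split; [lia|]. unfold u, v. rewrite Z2Nat.id by lia. exact hle.
  - assert (Hp: nonwandering X f p).
    { apply (nw_fwd X f g z p Hh). intros r N' hr.
      destruct (Hpq r N' hr) as [n [hn [_ [h _]]]]. eauto. }
    assert (Hq: nonwandering X f q).
    { apply (nw_fwd X f g y q Hh). intros r N' hr.
      destruct (Hpq r N' hr) as [n [hn [_ [_ h]]]]. eauto. }
    assert (Hc: forall m, dist X (iterZ X f g m p) (iterZ X f g m q) <= c).
    { intros m. apply Rnot_lt_le. intros hlt.
      set (gam := dist X (iterZ X f g m p) (iterZ X f g m q) - c).
      assert (hg: 0 < gam / 2) by (unfold gam; lra).
      destruct (iterZ_cont X f g Hh m p (gam/2) hg) as [d1 [hd1 H1]].
      destruct (iterZ_cont X f g Hh m q (gam/2) hg) as [d2 [hd2 H2]].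
      destruct (Hpq (Rmin d1 d2) (Z.to_nat (N - m)) (Rmin_pos _ _ hd1 hd2))
        as [n [hn [_ [hu hv]]]].
      pose proof (Rmin_l d1 d2). pose proof (Rmin_r d1 d2).
      rewrite dist_sym in hu, hv.
      specialize (H1 (u n) ltac:(lra)). specialize (H2 (v n) ltac:(lra)).
      unfold u, v in H1, H2.
      rewrite <- !iterZ_add in H1, H2 by (destruct Hh as [_ [_ [? ?]]]; assumption).
      specialize (HN (m + Z.of_nat n)%Z ltac:(lia)).
      pose proof (dist_tri X (iterZ X f g m p) (iterZ X f g (m + Z.of_nat n) z)
                     (iterZ X f g m q)).
      pose proof (dist_tri X (iterZ X f g (m + Z.of_nat n) z)
                     (iterZ X f g (m + Z.of_nat n) y) (iterZ X f g m q)).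
      pose proof (dist_sym X (iterZ X f g (m + Z.of_nat n) y) (iterZ X f g m q)).
      unfold gam in *. lra. }
    specialize (Hexp p q Hp Hq Hc). subst q.
    destruct (Hpq (eta/2) 0%nat ltac:(lra)) as [n [_ [hP [hu hv]]]].
    pose proof (dist_tri X (u n) p (v n)). rewrite (dist_sym X p) in H. lra.
Qed.

Lemma exp_swap (X : MetricSpace) (f g : X -> X) (c : R) :
  homeomorphism X f g ->
  (forall x y, nonwandering X f x -> nonwandering X f y ->
      (forall n : Z, dist X (iterZ X f g n x) (iterZ X f g n y) <= c) -> y = x) ->
  (forall x y, nonwandering X g x -> nonwandering X g y ->
      (forall n : Z, dist X (iterZ X g f n x) (iterZ X g f n y) <= c) -> y = x).
Proof.
  intros [cf [cg [gf fg]]] H x y hx hy hn. apply H.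
  - apply (nw_swap X g f); assumption.
  - apply (nw_swap X g f); assumption.
  - intros n. specialize (hn (- n)%Z). rewrite !(iterZ_swap X f g) in hn.
    replace (- - n)%Z with n in hn by lia. exact hn.
Qed.

Lemma iterZ_f (X : MetricSpace) (f g : X -> X) :
  homeomorphism X f g -> forall a x, f (iterZ X f g a x) = iterZ X f g (a + 1) x.
Proof. intros [_ [_ [gf fg]]] a x. rewrite iterZ_succ by assumption. reflexivity. Qed.

Theorem mainTheorem13 (X : MetricSpace) (f g : X -> X) :
  compact_space X ->
  homeomorphism X f g ->
  shadowing X f g ->
  expansive_on_Omega X f g ->
  L_shadowing X f g.
Proof.
  intros HC Hh Hs [c [hc Hexp]] eps heps.
  assert (Hh' : homeomorphism X g f).
  { destruct Hh as [a [b [d e]]]. repeat split; assumption. }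
  pose proof (Rmin_l eps c). pose proof (Rmin_r eps c).
  set (e0 := Rmin eps c / 2).
  assert (he0 : 0 < e0) by (unfold e0; pose proof (Rmin_pos _ _ heps hc); lra).
  destruct (Hs e0 he0) as [d0 [hd0 Hd0]].
  exists (d0/2). split; [lra|]. intros xs Hxs Htend.
  destruct (Hd0 xs) as [z Hz].
  { intros k. specialize (Hxs k). lra. }
  exists z. split.
  { intros k. specialize (Hz k). unfold e0 in *. lra. }
  intros eta heta.
  pose proof (Rmin_l (eta/2) e0). pose proof (Rmin_r (eta/2) e0).
  set (e1 := Rmin (eta/2) e0).
  assert (he1 : 0 < e1) by (unfold e1; apply Rmin_pos; lra).
  destruct (Hs e1 he1) as [d1 [hd1 Hd1]].
  destruct (Htend d1 hd1) as [N0 HN0].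
  assert (HN0' : forall k, (N0 <= Z.abs k)%Z -> dist X (f (xs k)) (xs (k + 1)%Z) < d1).
  { intros k hk. specialize (HN0 k hk). rewrite Rabs_pos_eq in HN0 by apply dist_nonneg. exact HN0. }
  set (N1 := Z.max N0 0).
  set (xf := fun k => if Z_le_dec N1 k then xs k else iterZ X f g (k - N1) (xs N1)).
  destruct (Hd1 xf) as [yf Hyf].
  { intros k. unfold xf. destruct (Z_le_dec N1 k); destruct (Z_le_dec N1 (k+1)).
    - apply HN0'. lia.
    - lia.
    - assert (E: k = (N1 - 1)%Z) by lia. subst k.
      rewrite iterZ_f by assumption. replace (N1 - 1 - N1 + 1)%Z with 0%Z by lia.
      replace (N1 - 1 + 1)%Z with N1 by lia. simpl. rewrite dist_self. lra.
    - rewrite iterZ_f by assumption. replace (k - N1 + 1)%Z with (k + 1 - N1)%Z by lia.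
      rewrite dist_self. lra. }
  destruct (asym X f g c HC Hh hc Hexp z yf N1) with (eta := eta/2) as [Mf HMf]; [|lra|].
  { intros k hk. specialize (Hz k). specialize (Hyf k). unfold xf in Hyf.
    destruct (Z_le_dec N1 k); [|lia].
    pose proof (dist_tri X (iterZ X f g k z) (xs k) (iterZ X f g k yf)) as H5.
    rewrite (dist_sym X (xs k)) in H5. unfold e1, e0 in *. lra. }
  set (xb := fun k => if Z_le_dec k (- N1) then xs k else iterZ X f g (k + N1) (xs (- N1)%Z)).
  destruct (Hd1 xb) as [yb Hyb].
  { intros k. unfold xb. destruct (Z_le_dec k (- N1)); destruct (Z_le_dec (k+1) (- N1)).
    - apply HN0'. lia.
    - assert (E: k = (- N1)%Z) by lia. subst k.
      replace (- N1 + 1 + N1)%Z with (0 + 1)%Z by lia. rewrite <- iterZ_f by assumption.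
      simpl. rewrite dist_self. lra.
    - lia.
    - rewrite iterZ_f by assumption. replace (k + N1 + 1)%Z with (k + 1 + N1)%Z by lia.
      rewrite dist_self. lra. }
  destruct (asym X g f c HC Hh' hc (exp_swap X f g c Hh Hexp) z yb N1) with (eta := eta/2)
    as [Mb HMb]; [|lra|].
  { intros k hk. rewrite !(iterZ_swap X f g). specialize (Hz (- k)%Z). specialize (Hyb (- k)%Z).
    unfold xb in Hyb. destruct (Z_le_dec (- k) (- N1)); [|lia].
    pose proof (dist_tri X (iterZ X f g (- k) z) (xs (- k)%Z) (iterZ X f g (- k) yb)) as H5.
    rewrite (dist_sym X (xs (- k)%Z)) in H5. unfold e1, e0 in *. lra. }
  exists (Z.max (Z.max Mf Mb) N1). intros k hk.
  rewrite Rabs_pos_eq by apply dist_nonneg.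
  destruct (Z_le_dec 0 k).
  - specialize (HMf k ltac:(lia)). specialize (Hyf k). unfold xf in Hyf.
    destruct (Z_le_dec N1 k); [|lia].
    pose proof (dist_tri X (iterZ X f g k z) (iterZ X f g k yf) (xs k)). unfold e1 in *. lra.
  - specialize (HMb (- k)%Z ltac:(lia)). rewrite !(iterZ_swap X f g) in HMb.
    replace (- - k)%Z with k in HMb by lia.
    specialize (Hyb k). unfold xb in Hyb.
    destruct (Z_le_dec k (- N1)); [|lia].
    pose proof (dist_tri X (iterZ X f g k z) (iterZ X f g k yb) (xs k)). unfold e1 in *. lra.
Qed.
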